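(* Let $G$ be a finite simple graph such that $\mathrm{mur}(G)$ is attained by a universal adjacency matrix $\alpha A_G+\beta I+\gamma J+\delta D_G$ of $G$ with $\delta=0$. Then for every induced subgraph $H$ of $G$, $\mathrm{mur}(H)\le\mathrm{mur}(G)$.
   Context: For a finite simple undirected graph $G$ on vertices $v_1,\dots,v_n$, let $A_G$ be its $(0,1)$-adjacency matrix, $D_G=\mathrm{diag}(d_1,\dots,d_n)$ with $d_i$ the degree of $v_i$, $I$ the $n\times n$ identity matrix and $J$ the $n\times n$ all-ones matrix. A universal adjacency matrix of $G$ is any matrix $\alpha A_G+\beta I+\gamma J+\delta D_G$ with real scalars $\alpha,\beta,\gamma,\delta$ and $\alpha\neq 0$. The minimum universal rank $\mathrm{mur}(G)$ is the minimum rank over all universal adjacency matrices of $G$. *)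

(* Defs.v *)
From HB Require Import structures.
From mathcomp Require Import all_boot all_order all_algebra.
From mathcomp Require Import boolp reals.
Set Implicit Arguments. Unset Strict Implicit. Unset Printing Implicit Defensive.
Import Order.TTheory GRing.Theory Num.Theory.
Local Open Scope ring_scope.

(* A graph on vertex set 'I_n is given by an adjacency relation e : rel 'I_n
   (assumed symmetric and irreflexive where it matters). *)

Definition adjmx (R : realType) (n : nat) (e : rel 'I_n) : 'M[R]_n :=
  \matrix_(i, j) (e i j)%:R.

Definition degree (n : nat) (e : rel 'I_n) (i : 'I_n) : nat :=
  #|[set j | e i j]|.

Definition degmx (R : realType) (n : nat) (e : rel 'I_n) : 'M[R]_n :=
  diag_mx (\row_i (degree e i)%:R).

Definition univmx (R : realType) (n : nat) (e : rel 'I_n) (a b c d : R) : 'M[R]_n :=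
  a *: adjmx R e + b%:M + c *: const_mx 1 + d *: degmx R e.

Definition has_univ_rank (R : realType) (n : nat) (e : rel 'I_n) (r : nat) : bool :=
  `[< exists a b c d : R, a != 0 /\ \rank (univmx e a b c d) = r >].

Lemma has_univ_rank_ex (R : realType) (n : nat) (e : rel 'I_n) :
  exists r, @has_univ_rank R n e r.
Proof.
exists (\rank (@univmx R n e 1 0 0 0)); apply/asboolP.
by exists 1, 0, 0, 0; split => //; exact: oner_neq0.
Qed.

Definition mur (R : realType) (n : nat) (e : rel 'I_n) : nat :=
  ex_minn (has_univ_rank_ex R e).

(* induced subgraph on the image of an injective map f : 'I_m -> 'I_n *)
Definition induced (n m : nat) (e : rel 'I_n) (f : 'I_m -> 'I_n) : rel 'I_m :=
  fun i j => e (f i) (f j).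

(* Main.v *)
Require Import Defs.
From HB Require Import structures.
From mathcomp Require Import all_boot all_order all_algebra.
From mathcomp Require Import boolp reals.
Import Order.TTheory GRing.Theory Num.Theory.
Local Open Scope ring_scope.

Lemma rank_mxsub (R : realType) m n (f : 'I_m -> 'I_n) (A : 'M[R]_n) :
  (\rank (mxsub f f A) <= \rank A)%N.
Proof.
rewrite mxsubrc; apply: (leq_trans (mxrankS (rowsub_sub _ _))).
rewrite -mxrank_tr -[X in (_ <= X)%N]mxrank_tr.
have -> : (colsub f A)^T = rowsub f A^T by apply/matrixP => i j; rewrite !mxE.
exact: mxrankS (rowsub_sub _ _).
Qed.

Theorem theorem23 (R : realType) (n : nat) (e : rel 'I_n)
  (e_sym : symmetric e) (e_irr : irreflexive e)
  (hG : exists a b c : R, a != 0 /\ \rank (univmx e a b c 0) = mur R e) :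
  forall (m : nat) (f : 'I_m -> 'I_n), injective f ->
    (mur R (induced e f) <= mur R e)%N.
Proof.
move=> m f finj; case: hG => a [b [c [a0 hr]]].
have E : univmx (induced e f) a b c 0 = mxsub f f (univmx e a b c 0).
  apply/matrixP => i j; rewrite !mxE /induced (inj_eq finj) mul0r.
  by rewrite mul0r.
rewrite -hr.
have rmin : forall r, has_univ_rank R (induced e f) r -> (mur R (induced e f) <= r)%N.
  by move=> r; rewrite /mur; case: ex_minnP => k _ H; apply: H.
 apply: (leq_trans _ (@rank_mxsub R m n f (univmx e a b c 0))).
rewrite -E; apply: rmin; apply/asboolP; by exists a, b, c, 0.
Qed.
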